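(* For all $m,n\ge 0$, the subgroup $\mathrm{GL}(m)\times\mathrm{GL}(n)\subset\mathrm{GL}(m+n)$ is parabolically connected; equivalently, for any decomposition $V=U\oplus W$ with $\dim U=m$, $\dim W=n$ and any full flag $V_\bullet$ in $V$, the group $(\mathrm{GL}(U)\times\mathrm{GL}(W))\cap\mathrm{Stab}(V_\bullet)$ is connected.
   Context: All groups are over $\mathbb{C}$ with the Zariski topology. $\mathrm{GL}(m)\times\mathrm{GL}(n)$ is embedded in $\mathrm{GL}(m+n)$ as block-diagonal matrices (equivalently $\mathrm{GL}(U)\times\mathrm{GL}(W)\subset\mathrm{GL}(U\oplus W)$). A closed subgroup $H$ of a reductive group $G$ is parabolically connected if $P\cap H$ is connected for every parabolic subgroup $P\subseteq G$. A full flag is a chain $0\subset V_1\subset\dots\subset V_{m+n}=V$ with $\dim V_i=i$; $\mathrm{Stab}(V_\bullet)$ is the subgroup of $\mathrm{GL}(V)$ preserving every $V_i$. *)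

(* Defs.v *)
From HB Require Import structures.
From mathcomp Require Import all_boot all_order all_algebra.
Set Implicit Arguments. Unset Strict Implicit. Unset Printing Implicit Defensive.
Import Order.TTheory GRing.Theory Num.Theory.
Local Open Scope ring_scope.

Inductive mxpolyfun (F : fieldType) (N : nat) : ('M[F]_N -> F) -> Prop :=
  | mxpf_const (c : F) : mxpolyfun (fun _ => c)
  | mxpf_coord (i j : 'I_N) : mxpolyfun (fun A => A i j)
  | mxpf_add f g : mxpolyfun f -> mxpolyfun g -> mxpolyfun (fun A => f A + g A)
  | mxpf_mul f g : mxpolyfun f -> mxpolyfun g -> mxpolyfun (fun A => f A * g A).

Definition zariski_closed (F : fieldType) (N : nat) (Z : 'M[F]_N -> Prop) :=
  exists P : ('M[F]_N -> F) -> Prop,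
    (forall f, P f -> mxpolyfun f) /\
    (forall A, Z A <-> (forall f, P f -> f A = 0)).

(* Since GL_N is open in M_N, the subspace topology
   from M_N agrees with the Zariski topology of GL_N. *)
Definition zariski_connected (F : fieldType) (N : nat) (S : 'M[F]_N -> Prop) :=
  ~ exists Z1 Z2 : 'M[F]_N -> Prop,
      [/\ zariski_closed Z1, zariski_closed Z2,
          (forall A, S A -> Z1 A \/ Z2 A),
          (forall A, S A -> Z1 A -> Z2 A -> False) &
          ((exists A, S A /\ Z1 A) /\ (exists A, S A /\ Z2 A))].

(* Row vectors, acted on by right multiplication: g preserves the subspace
   (row space of) X iff X *m g <= X. *)
Definition preserves (F : fieldType) (N : nat) (g X : 'M[F]_N) : bool :=
  (X *m g <= X)%MS.

Definition full_flag (F : fieldType) (N : nat) (Vs : 'I_N.+1 -> 'M[F]_N) :=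
  (forall i : 'I_N.+1, \rank (Vs i) = i) /\
  (forall i j : 'I_N.+1, (i <= j)%N -> (Vs i <= Vs j)%MS).

Definition GLUW_cap_stab (F : fieldType) (N : nat) (U W : 'M[F]_N)
    (Vs : 'I_N.+1 -> 'M[F]_N) (g : 'M[F]_N) : Prop :=
  [/\ g \in unitmx, preserves g U, preserves g W &
      forall i, preserves g (Vs i)].

(* Main.v *)
Require Import Defs.
From HB Require Import structures.
From mathcomp Require Import all_boot all_order all_algebra.
From Stdlib Require Import Classical.
Import Order.TTheory GRing.Theory Num.Theory.
Local Open Scope ring_scope.

Section Aux.
Variable F : numClosedFieldType.
Variable N : nat.
Variables A1 A2 : 'M[F]_N.

Definition Lt (t : F) : 'M[F]_N := A1 + t *: (A2 - A1).
Definition Mp : 'M[{poly F}]_N := map_mx polyC A1 + 'X *: map_mx polyC (A2 - A1).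

Lemma Mp_eval t : map_mx (horner_eval t) Mp = Lt t.
Proof.
apply/matrixP => i j; rewrite !mxE /= /horner_eval.
by rewrite hornerD hornerM hornerX !hornerC.
Qed.

Lemma Mp_entry t i j : (Mp i j).[t] = Lt t i j.
Proof. by rewrite /Lt /Mp !mxE hornerD hornerM hornerX !hornerC. Qed.

Lemma mxpf_line f : mxpolyfun f -> exists q : {poly F}, forall t, f (Lt t) = q.[t].
Proof.
elim.
- by move=> c; exists c%:P => t; rewrite hornerC.
- by move=> i j; exists (Mp i j) => t; rewrite Mp_entry.
- move=> f1 g1 _ [q1 H1] _ [q2 H2]; exists (q1 + q2) => t.
  by rewrite hornerD H1 H2.
- move=> f1 g1 _ [q1 H1] _ [q2 H2]; exists (q1 * q2) => t.
  by rewrite hornerM H1 H2.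
Qed.

Lemma det_line t : \det (Lt t) = (\det Mp).[t].
Proof.
by rewrite -Mp_eval det_map_mx.
Qed.

Lemma Lt0 : Lt 0 = A1.
Proof. by rewrite /Lt scale0r addr0. Qed.

Lemma Lt1 : Lt 1 = A2.
Proof. by rewrite /Lt scale1r addrC subrK. Qed.

Lemma pres_line (X : 'M[F]_N) t :
  preserves A1 X -> preserves A2 X -> preserves (Lt t) X.
Proof.
rewrite /preserves /Lt => h1 h2.
rewrite mulmxDr -scalemxAr mulmxBr; apply: addmx_sub => //.
apply: scalemx_sub; rewrite -mulmxBr.
by apply: stablemxD => //; rewrite stablemxN.
Qed.

End Aux.
Arguments Lt {F N}.
Arguments Mp {F N}.
Arguments Mp_eval {F N}.
Arguments Mp_entry {F N}.
Arguments mxpf_line {F N}.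
Arguments det_line {F N}.
Arguments Lt0 {F N}.
Arguments Lt1 {F N}.
Arguments pres_line {F N}.

Lemma exists_nonroot (F : numClosedFieldType) (r : {poly F}) :
  r != 0 -> exists t, ~~ root r t.
Proof.
move=> r0; apply: NNPP => H.
have Hall : all (root r) (mkseq (fun i => (i%:R : F)) (size r)).
  by apply/allP => x _; apply/negPn/negP => nr; apply: H; exists x.
have Hu : uniq (mkseq (fun i => (i%:R : F)) (size r)).
  by apply: mkseq_uniq => a b /eqP; rewrite eqr_nat => /eqP.
by have := max_poly_roots r0 Hall Hu; rewrite size_mkseq ltnn.
Qed.


Theorem proposition1 (F : numClosedFieldType) (m n : nat)
    (U W : 'M[F]_(m + n)) (Vs : 'I_(m + n).+1 -> 'M[F]_(m + n)) :
  \rank U = m -> \rank W = n -> (U :&: W == (0 : 'M[F]_(m + n)))%MS ->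
  full_flag Vs ->
  zariski_connected (GLUW_cap_stab U W Vs).
Proof.
move=> _ _ _ _ [Z1 [Z2 [[P1 [hP1 eZ1]] [P2 [hP2 eZ2]] cov dis
  [[B1 [HB1 Z1B1]] [B2 [HB2 Z2B2]]]]]].
case: (classic (Z1 B2)) => [z12|nz12]; first exact: (dis B2).
case: (classic (Z2 B1)) => [z21|nz21]; first exact: (dis B1).
have [f1 [Pf1 f1B2]] : exists f, P1 f /\ f B2 <> 0.
  apply: NNPP => H; apply: nz12; apply/eZ1 => f Pf.
  by apply: NNPP => Hf; apply: H; exists f.
have [f2 [Pf2 f2B1]] : exists f, P2 f /\ f B1 <> 0.
  apply: NNPP => H; apply: nz21; apply/eZ2 => f Pf.
  by apply: NNPP => Hf; apply: H; exists f.
have [q1 Hq1] := mxpf_line B1 B2 _ (hP1 f1 Pf1).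
have [q2 Hq2] := mxpf_line B1 B2 _ (hP2 f2 Pf2).
have q1n : q1 != 0.
  by apply/eqP => q10; apply: f1B2; rewrite -(Lt1 B1 B2) Hq1 q10 horner0.
have q2n : q2 != 0.
  by apply/eqP => q20; apply: f2B1; rewrite -(Lt0 B1 B2) Hq2 q20 horner0.
case: HB1 => u1 pU1 pW1 pV1.
case: HB2 => u2 pU2 pW2 pV2.
have dn : \det (Mp B1 B2) != 0.
  apply/eqP => d0; move: u1; rewrite unitmxE unitfE -(Lt0 B1 B2) det_line d0.
  by rewrite horner0 eqxx.
have [t rt] := exists_nonroot _ _ (mulf_neq0 (mulf_neq0 q1n q2n) dn).
move: rt; rewrite rootE !hornerM !mulf_eq0 !negb_or => /andP[/andP[h1 h2] h3].
have HS : GLUW_cap_stab U W Vs (Lt B1 B2 t).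
  split.
  - by rewrite unitmxE unitfE det_line.
  - exact: pres_line.
  - exact: pres_line.
  - by move=> i; apply: pres_line.
case: (cov _ HS) => [/eZ1 z1|/eZ2 z2].
- by move: h1; rewrite -Hq1 z1 ?eqxx.
- by move: h2; rewrite -Hq2 z2 ?eqxx.
Qed.
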